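(* Let $\theta\in[0,\infty]$, $\eta\in(0,1)$, gravity parameters $g_1,g_2,\ldots\ge0$, and a sequence of examples $(x_1,y_1),(x_2,y_2),\ldots$ with $x_i\in\mathbb{R}^d$, $y_i\in\mathbb{R}$. Suppose there is $C>0$ with $\|x_i\|\le C$ for all $i$, and $1-2C^2\eta\neq0$. Run the following algorithm: start with $v_1=0\in\mathbb{R}^d$; at trial $i=1,2,\ldots$, set $w_i=T_1(v_i,g_i\eta,\theta)$, predict $\hat y_i=w_i^Tx_i$, observe $y_i$, and set $v_{i+1}=w_i+2\eta(y_i-\hat y_i)x_i$. Then for every $T\ge1$ and every $\bar w\in\mathbb{R}^d$, \[ \frac{1-2C^2\eta}{T}\sum_{i=1}^T\left[(w_i^Tx_i-y_i)^2+\frac{g_i}{1-2C^2\eta}\|w_i\cdot I(|w_i|\le\theta)\|_1\right] \le \frac{\|\bar w\|^2}{2\eta T}+\frac1T\sum_{i=1}^T\Big[(\bar w^Tx_i-y_i)^2+g_{i+1}\|\bar w\cdot I(|w_{i+1}|\le\theta)\|_1\Big]. \]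
   Context: $\|\cdot\|$ is the Euclidean norm and $\|\cdot\|_1$ the $1$-norm. For $v\in\mathbb{R}^d$, $\alpha\ge0$, $\theta\in[0,\infty]$, $T_1(v,\alpha,\theta)$ is applied coordinatewise: $T_1(v_j,\alpha,\theta)=\max(0,v_j-\alpha)$ if $v_j\in[0,\theta]$, $=\min(0,v_j+\alpha)$ if $v_j\in[-\theta,0]$, and $=v_j$ otherwise. For $v,v'\in\mathbb{R}^d$, $\|v\cdot I(|v'|\le\theta)\|_1=\sum_{j=1}^d|v_j|\,I(|v'_j|\le\theta)$ with $I$ the indicator function. The vector $w_i$ is the weight vector used for prediction at trial $i$. *)

(* Defs.v *)
From mathcomp Require Import all_boot all_order all_algebra.
From mathcomp Require Import reals constructive_ereal.
Set Implicit Arguments. Unset Strict Implicit. Unset Printing Implicit Defensive.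
Import Order.TTheory GRing.Theory Num.Theory.
Local Open Scope ring_scope.

Section Defs.
Variables (R : realType) (d : nat).
Definition vec := 'I_d -> R.

Definition dot (u v : vec) : R := \sum_(j < d) u j * v j.
Definition sqnorm (u : vec) : R := \sum_(j < d) u j ^+ 2.

Definition T1s (x alpha : R) (theta : \bar R) : R :=
  if (0 <= x) && (x%:E <= theta)%E then Num.max 0 (x - alpha)
  else if (x <= 0) && ((- x)%:E <= theta)%E then Num.min 0 (x + alpha)
  else x.

Definition T1 (v : vec) (alpha : R) (theta : \bar R) : vec :=
  fun j => T1s (v j) alpha theta.

Definition trunc_l1 (v v' : vec) (theta : \bar R) : R :=
  \sum_(j < d) (if (`|v' j|%:E <= theta)%E then `|v j| else 0).

(* The algorithm: v_1 = 0, w_i = T1(v_i, g_i eta, theta),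
   v_{i+1} = w_i + 2 eta (y_i - w_i^T x_i) x_i.  Trials are indexed 1,2,...;
   index 0 of the sequences is unused.  vseq i = v_i for i >= 1. *)
Fixpoint vseq (g : nat -> R) (eta : R) (theta : \bar R)
    (x : nat -> vec) (y : nat -> R) (i : nat) : vec :=
  match i with
  | 0 => fun _ => 0
  | 1 => fun _ => 0
  | i'.+1 =>
      let w := T1 (vseq g eta theta x y i') (g i' * eta) theta in
      fun j => w j + 2 * eta * (y i' - dot w (x i')) * x i' j
  end.

Definition wseq g eta theta x y (i : nat) : vec :=
  T1 (vseq g eta theta x y i) (g i * eta) theta.
End Defs.

(* Main.v *)
Require Import Defs.
From mathcomp Require Import all_boot all_order all_algebra.
From mathcomp Require Import reals constructive_ereal.
From mathcomp Require Import ring lra.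
Import Order.TTheory GRing.Theory Num.Theory.
Local Open Scope ring_scope.

Section Helpers.
Variables (R : realType) (d : nat).

Lemma coord (v u a : R) (th : \bar R) : 0 <= a ->
  (T1s v a th - u)^+2 + 2*a*(if (`|T1s v a th|%:E <= th)%E then `|T1s v a th| else 0)
  <= (v-u)^+2 + 2*a*(if (`|T1s v a th|%:E <= th)%E then `|u| else 0).
Proof.
move=> a0.
have hu1 := ler_norm u.
have hu2 : -u <= `|u| by rewrite ler_normr lexx orbT.
rewrite /T1s; case: ifP => [/andP[v0 vth] | hA].
  case: (leP a v) => hav.
    rewrite max_r ?subr_ge0 // ger0_norm ?subr_ge0 //.
    have -> : ((v-a)%:E <= th)%E by apply: le_trans vth; rewrite lee_fin; lra.
    nra.
  rewrite max_l; last by lra.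
  rewrite normr0.
  have -> : ((0:R)%:E <= th)%E by apply: le_trans vth; rewrite lee_fin.
  nra.
case: ifP => [/andP[v0 vth] | hB].
  case: (leP (v + a) 0) => hav.
    rewrite ler0_norm //.
    have -> : ((- (v+a))%:E <= th)%E by apply: le_trans vth; rewrite lee_fin; lra.
    nra.
  rewrite ?min_l; try lra.
  rewrite normr0.
  have -> : ((0:R)%:E <= th)%E by apply: le_trans vth; rewrite lee_fin; lra.
  nra.
case: ifP => // hI; exfalso.
case: (leP 0 v) => hv.
  by rewrite ger0_norm // in hI; rewrite hv hI in hA.
by rewrite ltr0_norm // in hI; rewrite (ltW hv) hI in hB.
Qed.

Lemma trunc_step (v wb : vec R d) a th : 0 <= a ->
  sqnorm (fun j => T1 v a th j - wb j) + 2*a*trunc_l1 (T1 v a th) (T1 v a th) th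
  <= sqnorm (fun j => v j - wb j) + 2*a*trunc_l1 wb (T1 v a th) th.
Proof.
move=> a0; rewrite /sqnorm /trunc_l1 !mulr_sumr -!big_split /=.
apply: ler_sum => j _; rewrite /T1; exact: coord.
Qed.

Lemma sqnorm_ge0 (u : vec R d) : 0 <= sqnorm u.
Proof. by apply: sumr_ge0 => j _; rewrite sqr_ge0. Qed.

Lemma grad_step (w wb xv : vec R d) (yv eta C : R) : 0 < eta -> sqnorm xv <= C^+2 ->
  sqnorm (fun j => (w j + 2*eta*(yv - dot w xv)*xv j) - wb j)
  <= sqnorm (fun j => w j - wb j) - 2*eta*(1-2*C^+2*eta)*(dot w xv - yv)^+2
     + 2*eta*(dot wb xv - yv)^+2.
Proof.
move=> e0 hN.
have hrs : \sum_(j < d) (w j - wb j) * xv j = (dot w xv - yv) - (dot wb xv - yv).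
  have -> : (dot w xv - yv) - (dot wb xv - yv) = dot w xv - dot wb xv by ring.
  rewrite /dot -sumrB; apply: eq_bigr => j _; ring.
have e : sqnorm (fun j => (w j + 2*eta*(yv - dot w xv)*xv j) - wb j)
   = sqnorm (fun j => w j - wb j) - 4*eta*(dot w xv - yv)*(\sum_(j < d) (w j - wb j) * xv j)
     + 4*eta^+2*(dot w xv - yv)^+2 * sqnorm xv.
  rewrite /sqnorm !mulr_sumr -sumrB -big_split /=; apply: eq_bigr => j _; ring.
rewrite e hrs.
move: (dot w xv - yv) (dot wb xv - yv) => r s.
have h1 : 4*eta^+2*r^+2 * sqnorm xv <= 4*eta^+2*r^+2 * C^+2.
  apply: ler_wpM2l => //; apply: mulr_ge0; [apply: mulr_ge0 => //; apply: exprn_ge0; lra | apply: sqr_ge0].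
have h2 : 0 <= eta * (r - s)^+2 by apply: mulr_ge0; [lra | apply: sqr_ge0].
nra.
Qed.

Lemma T1s0 a th : 0 <= a -> T1s (0:R) a th = 0.
Proof.
move=> a0; rewrite /T1s lexx /=.
case: ifP => _; first by rewrite max_l // sub0r oppr_le0.
case: ifP => _ //; by rewrite min_l // add0r.
Qed.

Lemma trunc_ge0 (u v : vec R d) th : 0 <= trunc_l1 u v th.
Proof. by apply: sumr_ge0 => j _; case: ifP. Qed.

End Helpers.
Arguments trunc_step {R d}.
Arguments grad_step {R d}.
Arguments sqnorm_ge0 {R d}.
Arguments trunc_ge0 {R d}.
Arguments T1s0 {R}.

Theorem corollary1 (R : realType) (d : nat) (theta : \bar R) (eta : R)
  (g : nat -> R) (x : nat -> vec R d) (y : nat -> R) (C : R) :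
  (0 <= theta)%E -> 0 < eta < 1 ->
  (forall i, (1 <= i)%N -> 0 <= g i) ->
  0 < C ->
  (forall i, (1 <= i)%N -> Num.sqrt (sqnorm (x i)) <= C) ->
  1 - 2 * C ^+ 2 * eta != 0 ->
  forall (T : nat) (wbar : vec R d), (1 <= T)%N ->
  let w := wseq g eta theta x y in
  (1 - 2 * C ^+ 2 * eta) / T%:R *
    \sum_(1 <= i < T.+1)
      ((dot (w i) (x i) - y i) ^+ 2
       + g i / (1 - 2 * C ^+ 2 * eta) * trunc_l1 (w i) (w i) theta)
  <= sqnorm wbar / (2 * eta * T%:R)
     + 1 / T%:R * \sum_(1 <= i < T.+1)
        ((dot wbar (x i) - y i) ^+ 2
         + g i.+1 * trunc_l1 wbar (w i.+1) theta).
Proof.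
move=> th0 /andP[e0 e1] g0 C0 hx hK T wb hT /=.
set w := wseq g eta theta x y.
set K := 1 - 2 * C ^+ 2 * eta.
pose D i := sqnorm (fun j => w i j - wb j).
pose L i := (dot (w i) (x i) - y i) ^+ 2.
pose Lb i := (dot wb (x i) - y i) ^+ 2.
pose A i := g i * trunc_l1 (w i) (w i) theta.
pose B i := g i * trunc_l1 wb (w i) theta.
have hN : forall i, (1 <= i)%N -> sqnorm (x i) <= C ^+ 2.
  move=> i hi; have := hx i hi; have := sqnorm_ge0 (x i).
  have := sqr_sqrtr (sqnorm_ge0 (x i)); have := sqrtr_ge0 (sqnorm (x i)).
  move: (Num.sqrt _) => q; move: (sqnorm _) => s; nra.
have step : forall i, (1 <= i)%N ->
   D i.+1 - D i + ((2*eta*K) * L i + (2*eta) * A i.+1)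
   <= (2*eta) * Lb i + (2*eta) * B i.+1.
  move=> i hi.
  have wS : w i.+1 = T1 (fun j => w i j + 2*eta*(y i - dot (w i) (x i))*x i j)
                        (g i.+1 * eta) theta.
    by case: i hi.
  have ga : 0 <= g i.+1 * eta by apply: mulr_ge0; [exact: g0 | lra].
  have := trunc_step (fun j => w i j + 2*eta*(y i - dot (w i) (x i))*x i j) wb _ theta ga.
  rewrite -wS => h1.
  have := grad_step (w i) wb (x i) (y i) eta C e0 (hN i hi).
  rewrite /D /L /Lb /A /B /K; nra.
have sum1 : \sum_(1 <= i < T.+1) (D i.+1 - D i + (2 * eta * K * L i + 2 * eta * A i.+1)) <= \sum_(1 <= i < T.+1) (2 * eta * Lb i + 2 * eta * B i.+1).
  apply: ler_sum_nat => i hi; apply: step; by case/ssrbool.andP: hi.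
rewrite big_split /= telescope_sumr // big_split /= -!mulr_sumr big_split /= -!mulr_sumr in sum1.
have D1 : D 1%N = sqnorm wb.
  rewrite /D; apply: eq_bigr => j _.
  rewrite /w /wseq /T1 /= T1s0 ?sub0r ?sqrrN //.
  by apply: mulr_ge0; [exact: g0 | lra].
have A1 : A 1%N = 0.
  rewrite /A /trunc_l1 big1 ?mulr0 // => j _.
  rewrite /w /wseq /T1 /= T1s0 ?normr0; first by case: ifP.
  by apply: mulr_ge0; [exact: g0 | lra].
have DT := sqnorm_ge0 (fun j => w T.+1 j - wb j).
have hA : \sum_(1 <= i < T.+1) A i <= \sum_(1 <= i < T.+1) A i.+1.
  rewrite big_nat_recl // A1 add0r big_nat_recr //= lerDl.
  by apply: mulr_ge0; [exact: g0 | exact: trunc_ge0].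
have hL : \sum_(1 <= i < T.+1) ((dot (w i) (x i) - y i) ^+ 2
       + g i / K * trunc_l1 (w i) (w i) theta)
     = \sum_(1 <= i < T.+1) L i + K^-1 * \sum_(1 <= i < T.+1) A i.
  rewrite mulr_sumr -big_split /=; apply: eq_bigr => i _; rewrite /L /A; ring.
have hR : \sum_(1 <= i < T.+1) ((dot wb (x i) - y i) ^+ 2
         + g i.+1 * trunc_l1 wb (w i.+1) theta)
     = \sum_(1 <= i < T.+1) Lb i + \sum_(1 <= i < T.+1) B i.+1.
  by rewrite -big_split.
rewrite hL hR.
move: sum1 hA DT; rewrite D1 -/(D T.+1).
move: (\sum_(1 <= i < T.+1) L i) (\sum_(1 <= i < T.+1) A i) (\sum_(1 <= i < T.+1) A i.+1)
  (\sum_(1 <= i < T.+1) Lb i) (\sum_(1 <= i < T.+1) B i.+1) (D T.+1) => SL SA SA' SLb SB DT'.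
move=> s1 hA DT.
have T0 : 0 < T%:R :> R by rewrite ltr0n.
have Kn : K != 0 by [].
have -> : K / T%:R * (SL + K^-1 * SA) = (K * SL + SA) / T%:R by field; rewrite Kn pnatr_eq0 -lt0n hT.
have -> : sqnorm wb / (2 * eta * T%:R) + 1 / T%:R * (SLb + SB)
   = (sqnorm wb / (2 * eta) + SLb + SB) / T%:R.
  field; rewrite pnatr_eq0 -lt0n hT /=; by apply: lt0r_neq0.
have Ti : 0 <= (T%:R : R)^-1 by rewrite invr_ge0 ler0n.
apply: (ler_wpM2r Ti).
have hq : sqnorm wb = 2 * eta * (sqnorm wb / (2 * eta)).
  field; by apply: lt0r_neq0.
move: hq s1; move: (sqnorm wb / (2 * eta)) => q hq s1.
rewrite hq in s1.
nra.
Qed.
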